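(* Let $G$ be a directed graph without self-loops with integer edge weights. Let $G'$ have vertices $u_A,u_B,u_C$ for each $u\in V(G)$ and, for every edge $(u,v)$ of $G$, edges $(u_A,v_B),(u_B,v_C),(u_C,v_A)$ of the same weight as $(u,v)$. Let $G''$ be obtained from $G'$ by deleting each edge $(u_B,v_C)$ independently with probability $1/2$ and deleting each vertex $u_A$ independently with probability $1/2$. If $G$ has no zero-weight triangle then $G''$ has no zero-weight triangle; if $G$ has a zero-weight triangle then, with probability at least $1/4$, the number of zero-weight triangles in $G''$ is odd.
   Context: A zero-weight triangle in a directed graph is a triple of vertices $a,b,c$ with edges $(a,b),(b,c),(c,a)$ whose weights sum to $0$. *)

(* Defs.v *)
From HB Require Import structures.
From mathcomp Require Import all_boot all_order all_algebra.
Set Implicit Arguments. Unset Strict Implicit. Unset Printing Implicit Defensive.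
Import Order.TTheory GRing.Theory Num.Theory.

(* A weighted directed graph on a finite vertex type T is given by an edge
   relation e : rel T and integer weights w : T -> T -> int (only the values
   on edges matter). *)

Definition zero_tri (T : finType) (e : rel T) (w : T -> T -> int) (a b c : T) : bool :=
  [&& e a b, e b c, e c a & (w a b + w b c + w c a == 0)%R].

Definition has_zero_tri (T : finType) (e : rel T) (w : T -> T -> int) : Prop :=
  exists a b c, zero_tri e w a b c.

(* number of zero-weight triangles, counted as ordered triples (a,b,c);
   every triangle is counted 3 times (its rotations), which does not change parity *)
Definition num_zero_tri (T : finType) (e : rel T) (w : T -> T -> int) : nat :=
  #|[set t : T * T * T | zero_tri e w t.1.1 t.1.2 t.2]|.

Definition edge_set (V : finType) (e : rel V) : {set V * V} :=
  [set p : V * V | e p.1 p.2].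

(* G' : vertices (u, i) with i : 'I_3, i = 0,1,2 standing for u_A, u_B, u_C;
   edges (u_A,v_B), (u_B,v_C), (u_C,v_A) for each edge (u,v) of G. *)
Definition Gp_edge (V : finType) (e : rel V) : rel (V * 'I_3) :=
  fun x y => e x.1 y.1 && (nat_of_ord y.2 == (x.2 + 1) %% 3).

Definition Gp_weight (V : finType) (w : V -> V -> int) : V * 'I_3 -> V * 'I_3 -> int :=
  fun x y => w x.1 y.1.

(* G'' : K = set of pairs (u,v) whose edge (u_B,v_C) is KEPT (a subset of E(G)),
   X = set of u whose vertex u_A is KEPT.  A deleted vertex loses its incident
   edges, so G'' is modelled on the same vertex type with the restricted
   edge relation. *)
Definition Gpp_present (V : finType) (X : {set V}) (x : V * 'I_3) : bool :=
  (nat_of_ord x.2 != 0) || (x.1 \in X).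

Definition Gpp_edge (V : finType) (e : rel V) (K : {set V * V}) (X : {set V})
  : rel (V * 'I_3) :=
  fun x y => [&& Gp_edge e x y, Gpp_present X x, Gpp_present X y &
              (if nat_of_ord x.2 == 1 then (x.1, y.1) \in K else true)].

(* Main.v *)
Require Import Defs.
From HB Require Import structures.
From mathcomp Require Import all_boot all_order all_algebra.
From mathcomp Require Import ring.
Set Implicit Arguments. Unset Strict Implicit. Unset Printing Implicit Defensive.
Import Order.TTheory GRing.Theory Num.Theory.

Definition l0 : 'I_3 := @Ordinal 3 0 isT.
Definition l1 : 'I_3 := @Ordinal 3 1 isT.
Definition l2 : 'I_3 := @Ordinal 3 2 isT.

Definition psi (V : finType) (p : 'I_3 * (V * V * V)) : (V * 'I_3) * (V * 'I_3) * (V * 'I_3) :=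
  let u := p.2.1.1 in let v := p.2.1.2 in let w := p.2.2 in
  if val p.1 == 0 then ((u, l0), (v, l1), (w, l2))
  else if val p.1 == 1 then ((v, l1), (w, l2), (u, l0))
  else ((w, l2), (u, l0), (v, l1)).

Definition SS (V : finType) (e : rel V) (w : V -> V -> int) K X :=
  [set t | zero_tri (Gpp_edge e K X) (Gp_weight w) t.1.1 t.1.2 t.2].

Definition S0 (V : finType) (e : rel V) (w : V -> V -> int) (K : {set V * V}) (X : {set V}) :=
  [set t : V * V * V | [&& zero_tri e w t.1.1 t.1.2 t.2, t.1.1 \in X & (t.1.2, t.2) \in K]].

Lemma zero_tri_rot (V : finType) (e : rel V) (w : V -> V -> int) a b c :
  zero_tri e w a b c = zero_tri e w b c a.
Proof.
rewrite /zero_tri (_ : (w b c + w c a + w a b = w a b + w b c + w c a)%R); last by ring.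
by case: (e a b); case: (e b c); case: (e c a).
Qed.

Lemma psiP (V : finType) (e : rel V) (w : V -> V -> int) K X p :
  (psi p \in SS e w K X) = (p.2 \in S0 e w K X).
Proof.
case: p => [[[|[|[|i]]] Hi] [[u v] x]] //; rewrite !inE /psi /=.
- rewrite /zero_tri /Gpp_edge /Gp_edge /Gpp_present /Gp_weight /=.
  by case: (e u v); case: (e v x); case: (e x u); case: (u \in X); case: ((v, x) \in K);
    rewrite /= ?andbT ?andbF.
- rewrite [in RHS]zero_tri_rot /zero_tri /Gpp_edge /Gp_edge /Gpp_present /Gp_weight /=.
  by case: (e u v); case: (e v x); case: (e x u); case: (u \in X); case: ((v, x) \in K);
    rewrite /= ?andbT ?andbF.
- rewrite [in RHS]zero_tri_rot [in RHS]zero_tri_rot /zero_tri /Gpp_edge /Gp_edge /Gpp_present /Gp_weight /=.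
  by case: (e u v); case: (e v x); case: (e x u); case: (u \in X); case: ((v, x) \in K);
    rewrite /= ?andbT ?andbF.
Qed.

Lemma psi_inj (V : finType) : injective (@psi V).
Proof.
move=> [[[|[|[|i]]] Hi] [[u v] x]] [[[|[|[|j]]] Hj] [[u' v' x']]] //;
  rewrite /psi /= => [[-> -> ->]]; congr (_, _); exact: val_inj.
Qed.

Lemma SS_img (V : finType) (e : rel V) (w : V -> V -> int) K X :
  SS e w K X = [set psi p | p in setX [set: 'I_3] (S0 e w K X)].
Proof.
apply/setP => t; apply/idP/imsetP => [Ht|[p Hp ->]]; last first.
  by rewrite psiP; move: Hp; rewrite inE => /andP[].
case: t Ht => [[[a i] [b j]] [c k]] Ht.
have Ht' := Ht.
move: Ht; rewrite inE /=.
rewrite /zero_tri /Gpp_edge /Gp_edge /= => /and4P[/and4P[/andP[_ /eqP Hj] _ _ _]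
   /and4P[/andP[_ /eqP Hk] _ _ _] _ _].
case: i Hj Ht' => [[|[|[|i]]] Hi] //= Hj Ht'.
- have Ej : j = l1 by apply: val_inj. rewrite Ej /= in Hk.
  have Ek : k = l2 by apply: val_inj.
  have Ei : Ordinal Hi = l0 by apply: val_inj.
  exists (l0, (a, b, c)); last by rewrite /psi /= Ej Ek Ei.
  rewrite in_setX in_setT /= -(psiP e w K X (l0, (a, b, c))) /psi /=.
  by rewrite Ej Ek Ei in Ht'.
- have Ej : j = l2 by apply: val_inj. rewrite Ej /= in Hk.
  have Ek : k = l0 by apply: val_inj.
  have Ei : Ordinal Hi = l1 by apply: val_inj.
  exists (l1, (c, a, b)); last by rewrite /psi /= Ej Ek Ei.
  rewrite in_setX in_setT /= -(psiP e w K X (l1, (c, a, b))) /psi /=.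
  by rewrite Ej Ek Ei in Ht'.
- have Ej : j = l0 by apply: val_inj. rewrite Ej /= in Hk.
  have Ek : k = l1 by apply: val_inj.
  have Ei : Ordinal Hi = l2 by apply: val_inj.
  exists (l2, (b, c, a)); last by rewrite /psi /= Ej Ek Ei.
  rewrite in_setX in_setT /= -(psiP e w K X (l2, (b, c, a))) /psi /=.
  by rewrite Ej Ek Ei in Ht'.
Qed.

Lemma num_S0 (V : finType) (e : rel V) (w : V -> V -> int) K X :
  num_zero_tri (Gpp_edge e K X) (Gp_weight w) = 3 * #|S0 e w K X|.
Proof.
rewrite /num_zero_tri -/(SS e w K X) SS_img card_imset; last exact: psi_inj.
by rewrite cardsX cardsT card_ord.
Qed.

Definition tog (T : finType) (A : {set T}) (a : T) : {set T} :=
  if a \in A then A :\ a else a |: A.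

Lemma in_tog (T : finType) (A : {set T}) a x : (x \in tog A a) = (x \in A) (+) (x == a).
Proof.
rewrite /tog; case: ifP => Ha; rewrite !inE; case: eqP => [->|]; rewrite ?Ha ?andbT ?orbT ?orbF //=; by case: (x \in A).
Qed.

Lemma tog_sub (T : finType) (A B : {set T}) a : A \subset B -> a \in B -> tog A a \subset B.
Proof.
move=> AB aB; apply/subsetP => x; rewrite in_tog.
case: eqP => [->|_]; first by rewrite addbT.
by rewrite addbF; apply: (subsetP AB).
Qed.

Lemma togK (T : finType) (A : {set T}) a : tog (tog A a) a = A.
Proof. by apply/setP => x; rewrite !in_tog -addbA addbb addbF. Qed.

Lemma odd_sum (I : finType) (F : I -> nat) :
  odd (\sum_i F i) = \big[addb/false]_i odd (F i).
Proof.
elim/big_rec2: _ => //= i m b _ <-; by rewrite oddD.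
Qed.

Lemma card_S0 (V : finType) (e : rel V) (w : V -> V -> int) K X :
  #|S0 e w K X| = \sum_t (if [&& zero_tri e w t.1.1 t.1.2 t.2, t.1.1 \in X & (t.1.2, t.2) \in K]
                          then 1 else 0).
Proof. by rewrite /S0 -sum1dep_card big_mkcond. Qed.

Lemma parity4 (V : finType) (e : rel V) (w : V -> V -> int) K X u0 v0 w0 :
  zero_tri e w u0 v0 w0 ->
  odd #|S0 e w K X| (+) odd #|S0 e w K (tog X u0)|
  (+) odd #|S0 e w (tog K (v0, w0)) X| (+) odd #|S0 e w (tog K (v0, w0)) (tog X u0)|.
Proof.
move=> H0.
rewrite !card_S0 !odd_sum -!big_split /= (bigD1 (u0, v0, w0)) //= big1 ?addbF.
  by rewrite !in_tog !eqxx H0 /=; case: (u0 \in X); case: ((v0, w0) \in K).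
case=> [[u v] x] /=; rewrite !in_tog => Hne.
case: (zero_tri e w u v x) => //=.
have : ~~ ((u == u0) && ((v, x) == (v0, w0))).
  apply: contra Hne => /andP[/eqP -> /eqP [-> ->]] //.
case: (u == u0); case: ((v, x) == (v0, w0)) => //= _;
case: (u \in X); case: ((v, x) \in K) => //.
Qed.

Lemma count4 (T : finType) (A B : {set T}) (g : T -> T) :
  (forall a, a \in A -> g a \in B) ->
  (forall b, #|[set a | (a \in A) && (g a == b)]| <= 4) ->
  #|A| <= 4 * #|B|.
Proof.
move=> HAB Hf; rewrite -(sum1_card (mem A)) (partition_big g (mem B)) //=.
rewrite mulnC -sum_nat_const; apply: leq_sum => b _.
by rewrite sum1dep_card.
Qed.

Theorem mainTheorem15 (V : finType) (e : rel V) (w : V -> V -> int)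
    (Hloop : irreflexive e) :
  (~ has_zero_tri e w ->
     forall (K : {set V * V}) (X : {set V}), K \subset edge_set e ->
       ~ has_zero_tri (Gpp_edge e K X) (Gp_weight w)) /\
  (has_zero_tri e w ->
     #|[set p : {set V * V} * {set V} | p.1 \subset edge_set e]|
     <= 4 * #|[set p : {set V * V} * {set V} |
                (p.1 \subset edge_set e)
                && odd (num_zero_tri (Gpp_edge e p.1 p.2) (Gp_weight w))]|).
Proof.
split.
  move=> Hno K X _ [a [b [c Habc]]]; apply: Hno.
  have : (a, b, c) \in SS e w K X by rewrite inE.
  rewrite SS_img => /imsetP[[i [[u v] x]] Hp _].
  move: Hp; rewrite in_setX !inE /= => /and3P[Hz _ _].
  by exists u, v, x.
move=> [u0 [v0 [w0 H0]]].
have He0 : (v0, w0) \in edge_set e by rewrite inE /=; case/and4P: H0.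
pose f (p : {set V * V} * {set V}) := odd #|S0 e w p.1 p.2|.
pose tX (p : {set V * V} * {set V}) := (p.1, tog p.2 u0).
pose tK (p : {set V * V} * {set V}) := (tog p.1 (v0, w0), p.2).
pose g p := if f p then p else if f (tX p) then tX p else if f (tK p) then tK p else tX (tK p).
apply: (count4 (g := g)).
  move=> [K X]; rewrite !inE /= => HK.
  have P4 := parity4 K X H0.
  rewrite /g /f /tX /tK /=.
  case: ifP => H1; first by rewrite HK num_S0 oddM H1.
  case: ifP => H2; first by rewrite HK num_S0 oddM H2.
  case: ifP => H3; first by rewrite (tog_sub HK He0) num_S0 oddM H3.
  rewrite (tog_sub HK He0) num_S0 oddM /=.
  by move: P4; rewrite H1 H2 H3.
move=> b.
apply: (leq_trans (subset_leq_card (_ : _ \subset [set x in [:: b; tX b; tK b; tX (tK b)]]))).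
  2: by rewrite cardsE; apply: card_size.
apply/subsetP => [[K X]]; rewrite !inE => /andP[_ /eqP <-].
rewrite /g /tX /tK; case: ifP => _; first by rewrite eqxx.
case: ifP => _; first by rewrite /= !togK eqxx !orbT.
case: ifP => _; first by rewrite /= !togK eqxx !orbT.
by rewrite /= !togK eqxx !orbT.
Qed.
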